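(* The elements $y_1+y_2+x_3$ and $y_1+y_2+y_3$ are perfect in $D^{2,2,2}$.
   Context: $D^{2,2,2}$ is the modular lattice generated by $x_1,y_1,x_2,y_2,x_3,y_3$ subject only to $x_i\subseteq y_i$ ($i=1,2,3$), with a greatest element $I$ adjoined. Join is written $a+b$. A representation $\rho$ of $D^{2,2,2}$ in a finite-dimensional vector space $X$ is a lattice morphism from $D^{2,2,2}$ to the subspace lattice of $X$, with $\rho(I)=X$. It is indecomposable if $X\neq0$ and there is no decomposition $X=X'\oplus X''$ with $X',X''\neq0$ and $\rho(a)=(\rho(a)\cap X')+(\rho(a)\cap X'')$ for all $a$. An element $a$ is perfect if $\rho(a)\in\{0,X\}$ for every indecomposable representation $\rho$ in a space $X$. *)

(* Defs.v *)
From HB Require Import structures.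
From mathcomp Require Import all_boot all_order all_algebra.
Set Implicit Arguments. Unset Strict Implicit. Unset Printing Implicit Defensive.
Import GRing.Theory.
Local Open Scope ring_scope.

Inductive idx := i1 | i2 | i3.

(* Lattice terms over the generators x_1,y_1,x_2,y_2,x_3,y_3 and the adjoined
   greatest element I.  Every element of D^{2,2,2} is the value of such a term. *)
Inductive lterm :=
  | Gx of idx
  | Gy of idx
  | Top
  | Join of lterm & lterm
  | Meet of lterm & lterm.

Declare Scope lterm_scope.
Notation "a \+ b" := (Join a b) (at level 50, left associativity) : lterm_scope.
Delimit Scope lterm_scope with LT.

(* A representation of D^{2,2,2} in X (= the vectType vT) is given by subspaces
   X_i = rho(x_i), Y_i = rho(y_i) with X_i <= Y_i; rho is then the unique lattice
   morphism extending them (D^{2,2,2} is the free modular lattice on these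
   generators subject to x_i <= y_i) with rho(I) = X.  [eval] computes rho. *)
Section Eval.
Variables (K : fieldType) (vT : vectType K).
Variables (Xs Ys : idx -> {vspace vT}).

Fixpoint eval (t : lterm) : {vspace vT} :=
  match t with
  | Gx i => Xs i
  | Gy i => Ys i
  | Top => fullv
  | Join a b => (eval a + eval b)%VS
  | Meet a b => (eval a :&: eval b)%VS
  end.

Definition is_rep : Prop := forall i, (Xs i <= Ys i)%VS.

Definition indecomposable : Prop :=
  (fullv : {vspace vT}) != 0%VS /\
  ~ (exists X1 X2 : {vspace vT},
        [/\ X1 != 0%VS, X2 != 0%VS, directv (X1 + X2), (X1 + X2)%VS = fullv &
            forall t : lterm, eval t = (eval t :&: X1 + eval t :&: X2)%VS]).
End Eval.

Definition perfect (K : fieldType) (a : lterm) : Prop :=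
  forall (vT : vectType K) (Xs Ys : idx -> {vspace vT}),
    is_rep Xs Ys -> indecomposable Xs Ys ->
    eval Xs Ys a = 0%VS \/ eval Xs Ys a = fullv.

(* Main.v *)
Require Import Defs.
From HB Require Import structures.
From mathcomp Require Import all_boot all_order all_algebra.
Set Implicit Arguments. Unset Strict Implicit. Unset Printing Implicit Defensive.
Import GRing.Theory.
Local Open Scope ring_scope.

Section Aux.
Variables (K : fieldType) (vT : vectType K).

Definition compat (X1 X2 V : {vspace vT}) := V = (V :&: X1 + V :&: X2)%VS.

Lemma compat_join X1 X2 A B : compat X1 X2 A -> compat X1 X2 B ->
  compat X1 X2 (A + B)%VS.
Proof.
rewrite /compat => hA hB; apply/eqP; rewrite eqEsubv; apply/andP; split.
  rewrite subv_add; apply/andP; split; [rewrite {1}hA | rewrite {1}hB];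
  by apply: addvS; apply: capvS => //; rewrite ?addvSl ?addvSr.
by rewrite subv_add !capvSl.
Qed.

Lemma compat_meet X1 X2 A B : directv (X1 + X2) ->
  compat X1 X2 A -> compat X1 X2 B -> compat X1 X2 (A :&: B)%VS.
Proof.
move=> /directv_addP hd; rewrite /compat => hA hB; apply/eqP; rewrite eqEsubv;
  apply/andP; split; last by rewrite subv_add !capvSl.
apply/subvP => w /memv_capP [wA wB].
move: wA; rewrite {1}hA => /memv_addP [a1 ha1 [a2 ha2 ea]].
move: wB; rewrite {1}hB => /memv_addP [b1 hb1 [b2 hb2 eb]].
move: ha1 ha2 hb1 hb2; rewrite !memv_cap => /andP[a1A a1X] /andP[a2A a2X]
  /andP[b1B b1X] /andP[b2B b2X].
have h0 : a1 - b1 \in (X1 :&: X2)%VS.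
  rewrite memv_cap memvB //=.
  have -> : a1 - b1 = b2 - a2.
    have h : a1 + a2 = b1 + b2 by rewrite -ea -eb.
    by rewrite -(addrK a2 a1) h addrAC [b1 + b2]addrC addrK.
  by rewrite memvB.
move: h0; rewrite hd memv0 subr_eq0 => /eqP e1.
have e2 : a2 = b2.
  by apply: (addrI a1); rewrite -ea e1 -eb.
rewrite ea; apply: memv_add; rewrite !memv_cap.


  by rewrite a1A a1X /= e1 b1B.
by rewrite a2A a2X /= e2 b2B.
Qed.

Lemma compat_eval (Xs Ys : idx -> {vspace vT}) X1 X2 :
  directv (X1 + X2) -> (X1 + X2)%VS = fullv ->
  (forall i, compat X1 X2 (Xs i)) -> (forall i, compat X1 X2 (Ys i)) ->
  forall t, eval Xs Ys t = (eval Xs Ys t :&: X1 + eval Xs Ys t :&: X2)%VS.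
Proof.
move=> hd hf hx hy; elim => /=.
- exact: hx.
- exact: hy.
- by rewrite !(capv_idPr (subvf _)).
- by move=> a ha b hb; apply: compat_join.
- by move=> a ha b hb; apply: compat_meet.
Qed.

Lemma dirP (U V : {vspace vT}) : (U :&: V = 0)%VS -> directv (U + V).
Proof. by move/directv_addP. Qed.

Lemma key (Xs Ys : idx -> {vspace vT}) (S : {vspace vT}) :
  is_rep Xs Ys -> indecomposable Xs Ys ->
  (forall i, (Ys i <= S)%VS \/ i = i3) -> (Xs i3 <= S)%VS ->
  S = 0%VS \/ S = fullv.
Proof.
move=> hr [_ hind] hS hX3.
have [/eqP S0|Sn0] := boolP (S == 0%VS); first by left.
have [/eqP Sf|Snf] := boolP (S == fullv); first by right.
exfalso; apply: hind.
set D := (Ys i3 :\: S)%VS.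
set E := ((S + Ys i3)^C)%VS.
have Y3D : (Ys i3 <= S + D)%VS.
  by rewrite -{1}(addv_diff_cap (Ys i3) S) addvC addvS // capvSr.
have full : (S + (D + E))%VS = fullv.
  apply/eqP; rewrite eqEsubv subvf /= -(addv_complf (S + Ys i3)) addvA.
  by apply: addvS => //; rewrite subv_add addvSl Y3D.
have dir0 : (S :&: (D + E))%VS = 0%VS.
  apply/eqP; rewrite -subv0; apply/subvP => w.
  rewrite memv_cap => /andP[wS /memv_addP [d hd [e he ew]]].
  have dY : d \in Ys i3 by exact: (subvP (diffvSl (Ys i3) S) _ hd).
  have e0 : e = 0.
    apply/eqP; rewrite -memv0 -(capv_compl (S + Ys i3)) memv_cap he andbT.
    have -> : e = w - d by rewrite ew addrC addKr.
    by apply: memvB; [exact: (subvP (addvSl S (Ys i3)) _ wS) | exact: (subvP (addvSr S (Ys i3)) _ dY)].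
  move: ew; rewrite e0 addr0 => ew; subst w.
  by rewrite -(capv_diff (Ys i3) S) memv_cap hd wS.
have dir := dirP dir0.
have cS : forall V, (V <= S)%VS -> compat S (D + E) V.
  move=> V hV; rewrite /compat (capv_idPl hV).
  by apply/eqP; rewrite eqEsubv addvSl subv_add subvv capvSl.
exists S, (D + E)%VS; split.
- exact: Sn0.
- apply: contra Snf => /eqP h0; by rewrite -full h0 addv0.
- exact: dir.
- exact: full.
apply: compat_eval dir full _ _.
- move=> i; apply: cS; case: (hS i) => [h|->]; last exact: hX3.
  exact: subv_trans (hr i) h.
- move=> i; case: (hS i) => [h|->]; first exact: cS.
  rewrite /compat; apply/eqP; rewrite eqEsubv subv_add !capvSl andbT andbC /=.
  have h1 : (Ys i3 <= D + Ys i3 :&: S)%VS by rewrite addv_diff_cap subvv.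
  apply: subv_trans h1 _; rewrite subv_add; apply/andP; split.
    apply: subv_trans (addvSr _ _); by rewrite subv_cap diffvSl addvSl.
  exact: addvSl.
Qed.

End Aux.

Theorem mainTheorem13 (K : fieldType) :
  perfect K (Gy i1 \+ Gy i2 \+ Gx i3)%LT /\ perfect K (Gy i1 \+ Gy i2 \+ Gy i3)%LT.
Proof.
split => vT Xs Ys hr hi /=; have H := key hr hi; apply: H.
- case; [left|left|right] => //.
    exact: subv_trans (addvSl _ _) (addvSl _ _).
  exact: subv_trans (addvSr _ _) (addvSl _ _).
- exact: addvSr.
- case; left.
  + exact: subv_trans (addvSl _ _) (addvSl _ _).
  + exact: subv_trans (addvSr _ _) (addvSl _ _).
  + exact: addvSr.
- exact: subv_trans (hr i3) (addvSr _ _).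
Qed.
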